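(* Let $I\in\operatorname{PI}(B)$ have all-positive sign, i.e. $I(\chi)\in\operatorname{Irr}(B)$ for all $\chi\in\operatorname{Irr}(B)$. Then there exist $\lambda\in\operatorname{Irr}(B)$ and $\sigma\in\operatorname{Aut}(G)$ such that $I$ is a composition of $I_\lambda$ and $I_\sigma$ (specifically, $I_\sigma\circ I_\lambda\circ I=\mathrm{id}$ for suitable such $\lambda,\sigma$).
   Context: Let $p$ be a prime, $\zeta$ a primitive $p$-th root of unity, $K=\mathbb{Q}_p(\zeta)$, $\mathcal{O}=\mathbb{Z}_p[\zeta]$. Let $G=\langle g\rangle$ be cyclic of order $p$, $B=\mathcal{O}G$, $\operatorname{Irr}(B)=\{\chi_0,\dots,\chi_{p-1}\}$ with $\chi_a(g^b)=\zeta^{ab}$. $R_K(B)$ is the free abelian group on $\operatorname{Irr}(B)$ with the standard inner product. For a linear map $I$ of $R_K(B)$ put $\mu_I(x,y)=\sum_{\chi}I(\chi)(x)\chi(y)$. A generalized character $\mu$ of $G\times G$ is perfect if (i) $\mu(x,y)/|C_G(x)|,\ \mu(x,y)/|C_G(y)|\in\mathcal{O}$ for all $x,y$; (ii) whenever $\mu(x,y)\ne0$, $x$ is $p$-regular iff $y$ is. $\operatorname{PI}(B)$ is the group of bijective linear isometries $I$ of $R_K(B)$ with $\mu_I$ perfect. For $\lambda\in\operatorname{Irr}(B)$, $I_\lambda(\chi)=\lambda\chi$; for $\sigma\in\operatorname{Aut}(G)$, $I_\sigma(\chi)=\chi^\sigma$ where $\chi^\sigma(h)=\chi(h^{\sigma^{-1}})$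 (both extended linearly). *)

(* Defs.v *)
From HB Require Import structures.
From mathcomp Require Import all_boot all_order all_algebra all_fingroup all_solvable all_field.
Set Implicit Arguments. Unset Strict Implicit. Unset Printing Implicit Defensive.
Import Order.TTheory GRing.Theory Num.Theory.
Local Open Scope ring_scope.

(* G = <g> cyclic of order p is modelled as the additive group 'Z_p,
   g^b being represented by b.  Irr(B) = {chi_a | a : 'Z_p}.
   z is the primitive p-th root of unity zeta, taken in algC. *)

Definition chi (p : nat) (z : algC) (a h : 'Z_p) : algC := z ^+ (a * h)%N.

(* Elements of R_K(B): integer combinations of Irr(B), as coefficient vectors. *)
Definition RK (p : nat) := {ffun 'Z_p -> int}.

Definition basis (p : nat) (b : 'Z_p) : RK p := [ffun c => ((c == b) : nat)%:Z].

Definition ch (p : nat) (z : algC) (v : RK p) (h : 'Z_p) : algC :=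
  \sum_(c : 'Z_p) (v c)%:~R * chi z c h.

(* A linear map I of R_K(B) is given by the images of the basis; linext is its
   linear extension. *)
Definition linext (p : nat) (I : 'Z_p -> RK p) (v : RK p) : RK p :=
  [ffun c => \sum_(a : 'Z_p) v a * I a c].

Definition dotRK (p : nat) (v w : RK p) : int := \sum_(c : 'Z_p) v c * w c.

Definition mu (p : nat) (z : algC) (I : 'Z_p -> RK p) (x y : 'Z_p) : algC :=
  \sum_(a : 'Z_p) ch z (I a) x * chi z a y.

(* membership in O = Z_p[zeta] for elements of Q(zeta) inside algC:
   integrality away from p. *)
Definition in_O (p : nat) (x : algC) : Prop :=
  exists d : nat, coprime d p /\ (d%:R * x \in Aint).

Definition perfect (p : nat) (z : algC) (I : 'Z_p -> RK p) : Prop :=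
  forall x y : 'Z_p,
    [/\ in_O p (mu z I x y / (#|('C[x])%g|)%:R),
        in_O p (mu z I x y / (#|('C[y])%g|)%:R) &
        (mu z I x y != 0 -> ((p^'.-elt x)%g = (p^'.-elt y)%g))].

Definition PI (p : nat) (z : algC) (I : 'Z_p -> RK p) : Prop :=
  [/\ bijective (linext I),
      (forall v w, dotRK (linext I v) (linext I w) = dotRK v w) &
      perfect z I].

(* Main.v *)
Require Import Defs.
From HB Require Import structures.
From mathcomp Require Import all_boot all_order all_algebra all_fingroup all_solvable all_field.
From mathcomp Require Import ring.
Import Order.TTheory GRing.Theory Num.Theory.
Set Implicit Arguments. Unset Strict Implicit. Unset Printing Implicit Defensive.
Local Open Scope ring_scope.




Definition E (p : nat) (w : algC) (x : 'Z_p) : algC := w ^+ x.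

Lemma cardZp p : (1 < p)%N -> #|'Z_p| = p.
Proof. by move=> hp; rewrite card_ord Zp_cast. Qed.

Lemma valZp_add p (x y : 'Z_p) : (1 < p)%N -> val (x + y) = ((x + y) %% p)%N.
Proof. by move=> hp; exact: (congr1 (modn _) (Zp_cast hp)). Qed.

Lemma valZp_mul p (x y : 'Z_p) : (1 < p)%N -> val (x * y) = ((x * y) %% p)%N.
Proof. by move=> hp; exact: (congr1 (modn _) (Zp_cast hp)). Qed.

Lemma E_add p (w : algC) (x y : 'Z_p) : (1 < p)%N -> w ^+ p = 1 ->
  E w (x + y) = E w x * E w y.
Proof. by move=> hp hw; rewrite /E valZp_add // expr_mod // exprD. Qed.

Lemma E_mulN p (w : algC) (x y : 'Z_p) : (1 < p)%N -> w ^+ p = 1 ->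
  E w (x * y) = w ^+ (x * y)%N.
Proof. by move=> hp hw; rewrite /E valZp_mul // expr_mod. Qed.

Lemma E0 p (w : algC) : E w (0 : 'Z_p) = 1.
Proof. by rewrite /E expr0. Qed.

Lemma E_opp p (w : algC) (x : 'Z_p) : (1 < p)%N -> w ^+ p = 1 -> E w (- x) * E w x = 1.
Proof. by move=> hp hw; rewrite -E_add // addNr E0. Qed.

Lemma E_pow p (w : algC) (x : 'Z_p) : w ^+ p = 1 -> E w x ^+ p = 1.
Proof. by move=> hw; rewrite /E -exprM mulnC exprM hw expr1n. Qed.

Lemma E_inj p (w : algC) (x y : 'Z_p) : (1 < p)%N -> p.-primitive_root w ->
  E w x = E w y -> x = y.
Proof.
move=> hp hw /eqP; rewrite /E (eq_prim_root_expr hw) => /eqP.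
have hx : (x < p)%N by rewrite -{2}(Zp_cast hp).
have hy : (y < p)%N by rewrite -{2}(Zp_cast hp).
by rewrite !modn_small // => /val_inj.
Qed.

Lemma sum_root p (u : algC) : (1 < p)%N -> u ^+ p = 1 ->
  \sum_(m : 'Z_p) u ^+ m = if u == 1 then p%:R else 0.
Proof.
move=> hp hu; case: eqP => [->|/eqP hu1].
  under eq_bigr do rewrite expr1n.
  by rewrite sumr_const cardZp.
set S := \sum_(m : 'Z_p) _.
have: u * S = S.
  rewrite /S mulr_sumr [in RHS](reindex_inj (addIr (1 : 'Z_p))).
  apply: eq_bigr => m _; rewrite valZp_add // expr_mod // -exprS.
  by congr (u ^+ _); rewrite addn1.
move/eqP; rewrite -subr_eq0 -{2}[S]mul1r -mulrBl mulf_eq0 subr_eq0 (negbTE hu1).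
by move/eqP.
Qed.

Lemma E_sum p (w : algC) (c : 'Z_p) : (1 < p)%N -> p.-primitive_root w ->
  \sum_(y : 'Z_p) E w (c * y) = if c == 0 then p%:R else 0.
Proof.
move=> hp hw; have hw1 : w ^+ p = 1 by apply/eqP; rewrite -(prim_expr_order hw).
have -> : \sum_(y : 'Z_p) E w (c * y) = \sum_(y : 'Z_p) (E w c) ^+ y.
  by apply: eq_bigr => y _; rewrite E_mulN // /E exprM.
rewrite sum_root ?E_pow //; congr (if _ then _ else _).
apply/eqP/eqP => [|->]; last by rewrite E0.
by rewrite -(E0 p w) => /E_inj ->.
Qed.



Lemma prim_pow p (w : algC) : p.-primitive_root w -> w ^+ p = 1.
Proof. by move=> hw; apply/eqP; rewrite -(prim_expr_order hw). Qed.

Lemma E_conj p (w : algC) (x : 'Z_p) : (1 < p)%N -> w ^+ p = 1 ->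
  (E w x)^* = E w (- x).
Proof.
move=> hp hw; set u := E w x.
have up : u ^+ p = 1 by apply: E_pow.
have n1 : `|u| = 1.
  apply/eqP; rewrite -(@pexpr_eq1 _ _ p) ?normr_ge0 ?(ltnW hp) //.
  by rewrite -normrX up normr1.
have u0 : u != 0 by rewrite -normr_eq0 n1 oner_eq0.
apply: (mulfI u0); rewrite -normCK n1 expr1n mulrC E_opp //.
Qed.

Definition gam p (f : 'Z_p -> 'Z_p) (w : algC) (y : 'Z_p) : algC :=
  (p%:R)^-1 * \sum_(a : 'Z_p) E w (f a + a * y).

Lemma gam_conj p (f : 'Z_p -> 'Z_p) (w : algC) y : (1 < p)%N -> w ^+ p = 1 ->
  (gam f w y)^* = (p%:R)^-1 * \sum_(a : 'Z_p) E w (- (f a + a * y)).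
Proof.
move=> hp hw; rewrite /gam rmorphM fmorphV /= conjC_nat rmorph_sum /=.
by congr (_ * _); apply: eq_bigr => a _; rewrite E_conj.
Qed.

Lemma parseval p (f : 'Z_p -> 'Z_p) (w : algC) : (1 < p)%N ->
  p.-primitive_root w -> \sum_(y : 'Z_p) `|gam f w y| ^+ 2 = 1.
Proof.
move=> hp hw; have hw1 := prim_pow hw.
have pn0 : (p%:R : algC) != 0 by rewrite pnatr_eq0 -lt0n ltnW.
have key : forall y, `|gam f w y| ^+ 2 = (p%:R)^-1 * (p%:R)^-1 *
    \sum_(a : 'Z_p) \sum_(a' : 'Z_p) E w (f a - f a') * E w ((a - a') * y).
  move=> y; rewrite normCK gam_conj // /gam mulrACA mulr_suml; congr (_ * _).
  apply: eq_bigr => a _; rewrite mulr_sumr; apply: eq_bigr => a' _.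
  rewrite -!E_add //; congr (E w _); ring.
under eq_bigr do rewrite key.
rewrite -mulr_sumr exchange_big /=.
have -> : \sum_(a : 'Z_p) \sum_(y : 'Z_p) \sum_(a' : 'Z_p)
     E w (f a - f a') * E w ((a - a') * y) = \sum_(a : 'Z_p) (p%:R : algC).
  apply: eq_bigr => a _; rewrite exchange_big /=.
  rewrite (bigD1 a) //= [X in _ + X]big1 ?addr0.
    by under eq_bigr do rewrite !subrr mul0r !E0 mulr1; rewrite sumr_const cardZp.
  move=> a' na; rewrite -mulr_sumr E_sum // subr_eq0 eq_sym (negbTE na).
  by rewrite mulr0.
rewrite sumr_const cardZp // -[X in _ * X]mulr_natr -mulrA mulKf //.
by rewrite mulVf.
Qed.

Lemma inv_gam p (f : 'Z_p -> 'Z_p) (w : algC) (b : 'Z_p) : (1 < p)%N ->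
  p.-primitive_root w ->
  \sum_(y : 'Z_p) gam f w y * E w (- (b * y)) = E w (f b).
Proof.
move=> hp hw; have hw1 := prim_pow hw.
have pn0 : (p%:R : algC) != 0 by rewrite pnatr_eq0 -lt0n ltnW.
rewrite /gam; under eq_bigr do rewrite -mulrA mulr_suml.
rewrite -mulr_sumr exchange_big /=.
have -> : \sum_(a : 'Z_p) \sum_(y : 'Z_p) E w (f a + a * y) * E w (- (b * y))
   = \sum_(a : 'Z_p) E w (f a) * \sum_(y : 'Z_p) E w ((a - b) * y).
  apply: eq_bigr => a _; rewrite mulr_sumr; apply: eq_bigr => y _.
  rewrite -!E_add //; congr (E w _); ring.
rewrite (bigD1 b) //= [X in _ + X]big1 ?addr0.
  by rewrite E_sum // subrr eqxx mulrC mulfK.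
by move=> a na; rewrite E_sum // subr_eq0 (negbTE na) mulr0.
Qed.



Definition Qp (h : algC -> algC) :=
  exists Q : {poly rat}, forall x, h x = (map_poly (ratr : rat -> algC) Q).[x].

Lemma Qp_const (c : rat) : Qp (fun _ => ratr c).
Proof. by exists c%:P => x; rewrite map_polyC hornerC. Qed.

Lemma Qp_Xn n : Qp (fun x => x ^+ n).
Proof. by exists 'X^n => x; rewrite map_polyXn hornerXn. Qed.

Lemma Qp_mul h1 h2 : Qp h1 -> Qp h2 -> Qp (fun x => h1 x * h2 x).
Proof.
by move=> [Q1 e1] [Q2 e2]; exists (Q1 * Q2) => x; rewrite rmorphM hornerM e1 e2.
Qed.

Lemma Qp_sum (I : finType) (P : pred I) (F : I -> algC -> algC) :
  (forall i, Qp (F i)) -> Qp (fun x => \sum_(i | P i) F i x).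
Proof.
move=> hF; have [Q hQ] := fin_all_exists hF.
exists (\sum_(i | P i) Q i) => x; rewrite rmorph_sum horner_sum.
by apply: eq_bigr => i _; rewrite hQ.
Qed.

Lemma Qp_prod (I : finType) (P : pred I) (F : I -> algC -> algC) :
  (forall i, Qp (F i)) -> Qp (fun x => \prod_(i | P i) F i x).
Proof.
move=> hF; have [Q hQ] := fin_all_exists hF.
exists (\prod_(i | P i) Q i) => x; rewrite rmorph_prod horner_prod.
by apply: eq_bigr => i _; rewrite hQ.
Qed.

Lemma Qp_1 h : Qp h -> h 1 \in Crat.
Proof.
by move=> [Q e]; rewrite e -(rmorph1 (ratr : rat -> algC)) horner_map Crat_rat.
Qed.

Lemma Qp_avg p (z : algC) h : (1 < p)%N -> z ^+ p = 1 -> Qp h ->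
  \sum_(m : 'Z_p) h (z ^+ m) \in Crat.
Proof.
move=> hp hz [Q e].
under eq_bigr do rewrite e horner_coef.
rewrite exchange_big /=; apply: rpred_sum => i _.
rewrite -mulr_sumr; apply: rpredM; first by rewrite coef_map Crat_rat.
under eq_bigr do rewrite exprAC.
rewrite sum_root; last by rewrite exprAC hz expr1n.
  by case: ifP => _; rewrite ?rpred_nat ?rpred0.
by [].
Qed.



Lemma Zp_ltp p (k : 'Z_p) : (1 < p)%N -> (k < p)%N.
Proof. by move=> hp; rewrite -{2}(Zp_cast hp). Qed.

Lemma Zp_coprime p (k : 'Z_p) : prime p -> k != 0 -> coprime k p.
Proof.
move=> hp k0; have hp1 := prime_gt1 hp.
rewrite coprime_sym prime_coprime // gtnNdvd ?Zp_ltp // lt0n.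
by apply: contra k0 => /eqP k0; apply/eqP/val_inj.
Qed.

Lemma Zp_unit p (k : 'Z_p) : prime p -> k != 0 -> k \is a GRing.unit.
Proof.
move=> hp k0; rewrite -(natr_Zp k) unitZpE ?prime_gt1 //.
by rewrite coprime_sym Zp_coprime.
Qed.

Lemma Qp_ext h1 h2 : (forall x, h1 x = h2 x) -> Qp h1 -> Qp h2.
Proof. by move=> e [Q hQ]; exists Q => x; rewrite -e. Qed.

Lemma gam_aut p (f : 'Z_p -> 'Z_p) (z : algC) y (k : 'Z_p) :
  prime p -> p.-primitive_root z -> k != 0 ->
  exists nu : {rmorphism algC -> algC}, nu (gam f z y) = gam f (z ^+ k) y.
Proof.
move=> hp hz k0; have [nu hnu] := Qn_aut_exists (Zp_coprime hp k0).
exists nu; rewrite /gam rmorphM fmorphV rmorph_nat rmorph_sum; congr (_ * _).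
by apply: eq_bigr => a _; rewrite /E rmorphXn /= hnu // prim_pow.
Qed.

Lemma term_le_sum (I : finType) (F : I -> algC) (i : I) :
  (forall j, 0 <= F j) -> F i <= \sum_j F j.
Proof.
move=> h; rewrite (bigD1 i) //= lerDl; apply: sumr_ge0 => j _; exact: h.
Qed.

Lemma gam_ge1 p (f : 'Z_p -> 'Z_p) (z : algC) (y : 'Z_p) :
  prime p -> p.-primitive_root z -> gam f z y \in Aint -> gam f z y != 0 ->
  1 <= `|gam f z y| ^+ 2.
Proof.
move=> hp hz hA hn0; have hp1 := prime_gt1 hp; have hz1 := prim_pow hz.
pose hN x := \prod_(k : 'Z_p | k != 0) gam f (x ^+ k) y.
set N := hN z.
have hNA : N \in Aint.
  apply: rpred_prod => k k0; have [nu <-] := gam_aut f y hp hz k0.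
  by rewrite Aint_aut.
have hNn0 : N != 0.
  apply/prodf_neq0 => k k0; have [nu <-] := gam_aut f y hp hz k0.
  by rewrite fmorph_eq0.
have hQ : Qp hN.
  apply: Qp_prod => k.
  pose e (a : 'Z_p) : nat := val (f a + a * y).
  apply: (@Qp_ext (fun x => ratr (p%:R^-1) * \sum_(a : 'Z_p) x ^+ (k * e a)%N)).
    move=> x; rewrite /gam fmorphV rmorph_nat; congr (_ * _).
    apply: eq_bigr => a _; by rewrite /E exprM.
  apply: Qp_mul; first exact: Qp_const.
  by apply: Qp_sum => a; apply: Qp_Xn.
have hperm : forall m : 'Z_p, m != 0 -> hN (z ^+ m) = N.
  move=> m m0; rewrite /hN /N.
  have hu := Zp_unit hp m0.
  rewrite [RHS](reindex_inj (mulrI hu)) /=.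
  apply: eq_big => [k|k _]; first by rewrite -{2}(mulr0 m) (inj_eq (mulrI hu)).
  by rewrite -exprM -(E_mulN _ _ hp1 hz1).
have hS := Qp_avg hp1 hz1 hQ.
rewrite (bigD1 0) //= expr0 in hS.
have eS : \sum_(m : 'Z_p | m != 0) hN (z ^+ m) = N *+ (p.-1).
  rewrite (eq_bigr (fun _ => N)) => [|m m0]; last exact: hperm.
  by rewrite sumr_const cardC1 cardZp.
rewrite eS in hS.
have hNrat : N \in Crat.
  have h1 := Qp_1 hQ.
  have hp0 : (p.-1%:R : algC) != 0 by rewrite pnatr_eq0 -lt0n -ltnS prednK ?prime_gt0.
  have -> : N = (hN 1 + N *+ p.-1 - hN 1) / p.-1%:R.
    by rewrite [hN 1 + _]addrC addrK -mulr_natr mulfK.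
  by rewrite rpred_div ?rpredB ?rpred_nat.
have hNint : N \in Num.int by apply: Cint_rat_Aint.
have hN1 : 1 <= `|N| ^+ 2.
  by rewrite -(expr1n _ 2) lerXn2r ?nnegrE ?normr_ge0 ?norm_intr_ge1.
apply: le_trans hN1 _.
rewrite /N /hN normr_prod -prodrXl (bigD1 1) ?oner_eq0 //= expr1.
rewrite -[X in _ <= X]mulr1 ler_wpM2l ?exprn_ge0 ?normr_ge0 //.
apply: prodr_ile1 => k /andP[k0 _]; rewrite exprn_ge0 ?normr_ge0 //=.
rewrite -(parseval f hp1 (_ : p.-primitive_root (z ^+ k))).
  by apply: term_le_sum => j; rewrite exprn_ge0 ?normr_ge0.
by rewrite prim_root_exp_coprime // Zp_coprime.
Qed.



Lemma ch_basis p (z : algC) (b h : 'Z_p) : ch z (basis b) h = chi z b h.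
Proof.
rewrite /ch (bigD1 b) //= [X in _ + X]big1 ?addr0; first by rewrite ffunE eqxx mul1r.
by move=> c cb; rewrite ffunE (negbTE cb) mul0r.
Qed.

Lemma linext_basis p (I : 'Z_p -> RK p) a : linext I (basis a) = I a.
Proof.
apply/ffunP => c; rewrite ffunE (bigD1 a) //= [X in _ + X]big1 ?addr0.
  by rewrite ffunE eqxx mul1r.
by move=> a' na; rewrite ffunE (negbTE na) mul0r.
Qed.

Lemma chiE p (z : algC) (a h : 'Z_p) : (1 < p)%N -> z ^+ p = 1 ->
  chi z a h = E z (a * h).
Proof. by move=> hp hz; rewrite E_mulN. Qed.

Lemma cardC1Zp p (x : 'Z_p) : (1 < p)%N -> #|('C[x])%g| = p.
Proof.
move=> hp; have -> : ('C[x])%g = [set: 'Z_p].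
  apply/setP => u; rewrite in_setT; apply/cent1P; rewrite /commute.
  exact: addrC.
by rewrite cardsT cardZp.
Qed.

Lemma gam_Aint p (z : algC) (I : 'Z_p -> RK p) (f : 'Z_p -> 'Z_p) (y : 'Z_p) :
  prime p -> p.-primitive_root z -> (forall a, I a = basis (f a)) ->
  perfect z I -> gam f z y \in Aint.
Proof.
move=> hp hz hf hperf; have hp1 := prime_gt1 hp; have hz1 := prim_pow hz.
have pn0 : (p%:R : algC) != 0 by rewrite pnatr_eq0 -lt0n prime_gt0.
have hmu : mu z I 1 y = p%:R * gam f z y.
  rewrite /gam mulrA mulfV // mul1r /mu; apply: eq_bigr => a _.
  by rewrite hf ch_basis !chiE // mulr1 -E_add.
have hmuA : p%:R * gam f z y \in Aint.
  rewrite -hmu /mu; apply: rpred_sum => a _; apply: rpredM.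
    rewrite hf ch_basis; exact/rpredX/(Aint_prim_root hz).
  exact/rpredX/(Aint_prim_root hz).
have [h1 _ _] := hperf 1 y.
move: h1; rewrite cardC1Zp // hmu mulrC mulrA mulVf // mul1r.
move=> [d [hd hdA]].
have : coprimez d%:Z p%:Z by rewrite coprimezE.
case/coprimezP => [[u v] /= huv].
move: hdA hmuA; set g := gam f z y => hdA hmuA; clearbody g.
have -> : g = u%:~R * (d%:R * g) + v%:~R * (p%:R * g).
  rewrite !mulrA -mulrDl -[d%:R]/((d%:Z)%:~R) -[p%:R]/((p%:Z)%:~R).
  by rewrite -!intrM -intrD huv mul1r.
by rewrite rpredD // rpredM // Aint_int.
Qed.

Unset Implicit Arguments.
Theorem mainTheorem11 (p : nat) (hp : prime p) (z : algC)
  (hz : p.-primitive_root z) (I : 'Z_p -> RK p)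
  (hPI : PI z I) (hpos : forall a : 'Z_p, exists b : 'Z_p, I a = basis b) :
  exists (l : 'Z_p) (s : {perm 'Z_p}),
    s \in Aut [set: 'Z_p] /\
    forall a h : 'Z_p,
      chi z l ((s^-1)%g h) * ch z (I a) ((s^-1)%g h) = chi z a h.
Proof.
have hp1 := prime_gt1 hp; have hz1 := prim_pow hz.
have [f hf] := fin_all_exists hpos.
case: hPI => hbij _ hperf.
have hA y := gam_Aint y hp hz hf hperf.
have hpar := parseval f hp1 hz.
have nn y : 0 <= `|gam f z y| ^+ 2 by rewrite exprn_ge0 ?normr_ge0.
have [y0 hy0] : exists y0, gam f z y0 != 0.
  case: (pickP (fun y => gam f z y != 0)) => [y0 h|h]; first by exists y0.
  move: hpar; rewrite big1 => [/eqP|y _]; first by rewrite eq_sym oner_eq0.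
  by move: (h y) => /negbFE/eqP ->; rewrite normr0 expr0n.
have hzero y : y != y0 -> gam f z y = 0.
  move=> ny; apply/eqP; apply: contraTT isT => hy.
  have h1 := gam_ge1 hp hz (hA y) hy.
  have h0 := gam_ge1 hp hz (hA y0) hy0.
  move: hpar; rewrite (bigD1 y0) //= (bigD1 y) //= => e.
  have : 1 + 1 <= (1 : algC).
    rewrite -[X in _ <= X]e; apply: lerD => //; rewrite -[X in X <= _]addr0.
    by apply: lerD => //; apply: sumr_ge0.
  by rewrite gerDl ler10.
have hinv b : E z (f 0 - b * y0) = E z (f b).
  rewrite -(inv_gam f b hp1 hz) (bigD1 y0) //= [X in _ = _ + X]big1 ?addr0; last first.
    by move=> y ny; rewrite hzero // mul0r.
  have -> : gam f z y0 = E z (f 0).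
    rewrite -(inv_gam f 0 hp1 hz) (bigD1 y0) //= [X in _ + X]big1 ?addr0.
      by rewrite mul0r oppr0 E0 mulr1.
    by move=> y ny; rewrite hzero // mul0r.
  by rewrite -E_add.
have hfa b : f b = f 0 - b * y0 by apply: (E_inj hp1 hz); rewrite hinv.
have y0n0 : y0 != 0.
  apply/eqP => y00; have [g gK _] := hbij.
  have : linext I (basis 1) = linext I (basis 0).
    by rewrite !linext_basis !hf (hfa 1) y00 mulr0 subr0.
  move/(congr1 g); rewrite !gK => /(congr1 (fun v : RK p => v 1)).
  by rewrite !ffunE eqxx; case: eqP => // /(congr1 val).
have hu : (- y0) \is a GRing.unit by apply: Zp_unit; rewrite // oppr_eq0.
set u := (- y0)^-1.
have uu : u \is a GRing.unit by rewrite unitrV.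
pose t := perm (mulrI uu).
exists (- f 0), (t^-1)%g; split.
  rewrite groupV inE; apply/andP; split.
    by apply/subsetP => x; rewrite inE.
  by apply/morphicP => x y _ _; rewrite !permE /= mulrDr.
move=> a h; rewrite invgK hf ch_basis !chiE // -E_add // permE; congr (E z _).
rewrite (hfa a); transitivity (a * h * (- y0 * u)); first ring.
by rewrite mulrV // mulr1.
Qed.
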